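(* Let $\alpha=1/4$, so each of the four user types $(x,e)\in\{1/4,3/4\}^2$ arrives with mass $1/4$ per period. Let $q_1^*,q_3^*\in(0,1)$ with $q_1^*\neq q_3^*$ be the status quo qualities of segments $x=1/4$ and $x=3/4$. Then there exist treatment qualities $q_1,q_3\in(0,1)$ such that (i) the experimental ARQ increases: $\frac{q_3}{1-q_3^*}+\frac{q_1}{1-q_1^*}>\frac{q_3^*}{1-q_3^*}+\frac{q_1^*}{1-q_1^*}$; (ii) the experimental churn rate decreases: $\dfrac{\frac{1-q_3}{1-q_3^*}+\frac{1-q_1}{1-q_1^*}}{2\left(\frac{4}{3(1-q_3^* )}+\frac{4}{3(1-q_1^* )}\right)}<\dfrac{1}{\frac{4}{3(1-q_3^* )}+\frac{4}{3(1-q_1^* )}}$; and (iii) the treatment's steady-state total user population is smaller: $\frac{4}{3(1-q_3)}+\frac{4}{3(1-q_1)}<\frac{4}{3(1-q_3^* )}+\frac{4}{3(1-q_1^* )}$.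
   Context: Model: a type-$(x,e)$ user churns each period with probability $(1-q(x))(1-e)$, where $q(x)\in(0,1)$ is the algorithm's recommendation quality for segment $x$; the steady-state mass of type $(x,e)$ is $F(x,e)/((1-q(x))(1-e))$, here with $F\equiv 1/4$. The experimental ARQ and churn rate of a treatment are computed by applying the treatment qualities $q_1=q(1/4)$, $q_3=q(3/4)$ for one period to the status quo's steady-state population (status quo qualities $q_1^*,q_3^*$); inequalities (i)–(iii) are these comparisons written out (in (i) both sides are the ARQ numerators over the common positive denominator $\frac{4}{3(1-q_3^* )}+\frac{4}{3(1-q_1^* )}$, after cancelling the factor $4/3$). *)

(* Defs.v *)
From Stdlib Require Import Reals.
Open Scope R_scope.

Definition total_pop (q3 q1 : R) : R := 4 / (3 * (1 - q3)) + 4 / (3 * (1 - q1)).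

(* Main.v *)
Require Import Defs.
From Stdlib Require Import Reals Lra Psatz.
Open Scope R_scope.
Lemma core (x y : R) : 0<x -> x<y -> y<1 -> exists X Y, 0<X<1 /\ 0<Y<1 /\ X/x+Y/y<2 /\ 1/X+1/Y < 1/x+1/y.
Proof.
  intros hx hxy hy.
  set (u := x*(y-x)*(1-x)/(2*(x+y)^2)).
  set (s := (x+y)/(2*x)).
  assert (hxy2 : 0 < (x+y)^2) by nra.
  assert (hu0 : 0 < u) by (unfold u; apply Rdiv_lt_0_compat; [apply Rmult_lt_0_compat; nra|nra]).
  assert (hu1 : u * (x+y)^2 < x*(y-x)/2).
  { unfold u. replace (x * (y - x) * (1 - x) / (2 * (x + y) ^ 2) * (x + y) ^ 2) with (x*(y-x)*(1-x)/2) by (field; repeat split; apply Rgt_not_eq; lra). assert (0 < x*(y-x)) by nra. nra. }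
  assert (hsu : s*u*(2*x) = (x+y)*u) by (unfold s; field; repeat split; apply Rgt_not_eq; lra).
  exists (x*(1+u)), (y*(1-s*u)).
  assert (hsu1 : s*u < 1/2).
  { assert ((x+y)*u*(x+y) < x*(y-x)/2) by nra.
    assert ((x+y)*u < (y-x)/2 /(x+y)*x) by (apply (Rmult_lt_reg_r (x+y)); [lra|]; field_simplify; nra).
    assert ((y-x)/2/(x+y) < 1/2) by (apply (Rmult_lt_reg_r (x+y)); [lra|]; field_simplify; nra).
    nra. }
  assert (hs1 : 1 < s) by (unfold s; apply (Rmult_lt_reg_r (2*x)); [lra|]; field_simplify; lra).
  assert (hxu : x*u < 1 - x).
  { assert (x*x*(y-x) < (x+y)^2) by nra.
    assert (x*u*(2*(x+y)^2) = x*x*(y-x)*(1-x)) by (unfold u; field; repeat split; apply Rgt_not_eq; lra).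
    nra. }
  split; [split; nra|]. split; [split; nra|]. split.
  - replace (x*(1+u)/x + y*(1-s*u)/y) with (2 + u - s*u) by (field; repeat split; apply Rgt_not_eq; lra). nra.
  -
    assert (key : s*x*(1+u) < y*(1-s*u)).
    { assert (s*x = (x+y)/2) by (unfold s; field; repeat split; apply Rgt_not_eq; lra). nra. }
    assert (0 < 1+u) by lra. assert (0 < 1 - s*u) by lra.
    apply Rlt_0_minus.
    replace (1/x+1/y - (1/(x*(1+u)) + 1/(y*(1-s*u)))) with
      (u*(y*(1-s*u) - s*x*(1+u)) / (x*y*(1+u)*(1-s*u))) by (field; repeat split; lra).
    apply Rdiv_lt_0_compat; [nra|]. repeat apply Rmult_lt_0_compat; lra.
Qed.
Lemma finish (q1s q3s q1 q3 : R) :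
  0 < q1s < 1 -> 0 < q3s < 1 -> 0 < q1 < 1 -> 0 < q3 < 1 ->
  (1-q3)/(1-q3s) + (1-q1)/(1-q1s) < 2 ->
  1/(1-q3)+1/(1-q1) < 1/(1-q3s)+1/(1-q1s) ->
    q3 / (1 - q3s) + q1 / (1 - q1s) > q3s / (1 - q3s) + q1s / (1 - q1s) /\
    ((1 - q3) / (1 - q3s) + (1 - q1) / (1 - q1s)) / (2 * total_pop q3s q1s)
      < 1 / total_pop q3s q1s /\
    total_pop q3 q1 < total_pop q3s q1s.
Proof.
  intros h1 h3 g1 g3 A B.
  assert (E : forall q qs, qs < 1 -> q/(1-qs) = 1/(1-qs) - (1-q)/(1-qs)).
  { intros q qs hq. field. apply Rgt_not_eq; lra. }
  assert (E2 : forall qs, qs < 1 -> qs/(1-qs) = 1/(1-qs) - 1).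
  { intros qs hq. field. apply Rgt_not_eq; lra. }
  assert (P : forall q, q < 1 -> total_pop q3 q1 = 4/3 * (1/(1-q3)+1/(1-q1))).
  { intros. unfold total_pop. field. split; apply Rgt_not_eq; lra. }
  assert (Ps : total_pop q3s q1s = 4/3 * (1/(1-q3s)+1/(1-q1s))).
  { unfold total_pop. field. split; apply Rgt_not_eq; lra. }
  assert (0 < 1/(1-q3s)) by (apply Rdiv_lt_0_compat; lra).
  assert (0 < 1/(1-q1s)) by (apply Rdiv_lt_0_compat; lra).
  assert (T : 0 < total_pop q3s q1s) by (rewrite Ps; lra).
  split; [|split].
  - rewrite (E q3 q3s), (E q1 q1s), (E2 q3s), (E2 q1s); lra.
  - unfold Rdiv at 1. apply (Rmult_lt_reg_r (2 * total_pop q3s q1s)); [lra|].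
    replace (((1 - q3) / (1 - q3s) + (1 - q1) / (1 - q1s)) * / (2 * total_pop q3s q1s) * (2 * total_pop q3s q1s))
      with ((1 - q3) / (1 - q3s) + (1 - q1) / (1 - q1s)) by (field; repeat split; apply Rgt_not_eq; lra).
    replace (1 / total_pop q3s q1s * (2 * total_pop q3s q1s)) with 2 by (field; repeat split; apply Rgt_not_eq; lra).
    exact A.
  - rewrite (P q3) by lra. rewrite Ps. lra.
Qed.

Theorem corollary2 (q1s q3s : R) :
  0 < q1s < 1 -> 0 < q3s < 1 -> q1s <> q3s ->
  exists q1 q3 : R,
    0 < q1 < 1 /\ 0 < q3 < 1 /\
    (* (i) experimental ARQ increases *)
    q3 / (1 - q3s) + q1 / (1 - q1s) > q3s / (1 - q3s) + q1s / (1 - q1s) /\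
    (* (ii) experimental churn rate decreases *)
    ((1 - q3) / (1 - q3s) + (1 - q1) / (1 - q1s)) / (2 * total_pop q3s q1s)
      < 1 / total_pop q3s q1s /\
    (* (iii) treatment steady-state population smaller *)
    total_pop q3 q1 < total_pop q3s q1s.
Proof.
  intros h1 h3 hne.
  destruct (Rlt_or_le q1s q3s) as [hl|hl].
  - destruct (core (1-q3s) (1-q1s)) as (X & Y & hX & hY & A & B); try lra.
    exists (1-Y), (1-X). split; [lra|]. split; [lra|].
    apply finish; try lra; replace (1-(1-X)) with X by ring; replace (1-(1-Y)) with Y by ring; lra.
  - assert (q3s < q1s) by (destruct hl; [lra| congruence]).
    destruct (core (1-q1s) (1-q3s)) as (X & Y & hX & hY & A & B); try lra.
    exists (1-X), (1-Y). split; [lra|]. split; [lra|].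
    apply finish; try lra; replace (1-(1-X)) with X by ring; replace (1-(1-Y)) with Y by ring; lra.
Qed.
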